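(* Let $C_1,\dots,C_m\subseteq\mathbb{R}^L$ be closed convex sets (the convex feasibility problem $T$), let $\mathrm{Prox}_T:\mathbb{R}^L\to[0,\infty)$ be a proximity function, let $\mathcal{A}:\mathbb{R}^L\to\mathbb{R}^L$ be an algorithmic operator, and let $\phi:\mathbb{R}^L\to\mathbb{R}$ be a target function. Assume that the basic algorithm defined by $\mathcal{A}$ is strongly perturbation resilient and that there is $\varepsilon>0$ such that for every $x^0\in\mathbb{R}^L$ the $\varepsilon$-output of the sequence $x^{k+1}=\mathcal{A}(x^k)$ exists. Let $\{\eta_\ell\}_{\ell=0}^\infty$ be a summable sequence of positive real numbers, let $\{N_k\}_{k=0}^\infty$ be a sequence of positive integers bounded by some positive integer $N$, and let $\bar y\in\mathbb{R}^L$. Let $\{y^k\}_{k=0}^\infty$ be any sequence produced by the following procedure (Algorithm 1): set $y^0=\bar y$ and a counter $\ell=0$; for each $k\ge 0$, set $y^{k,0}=y^k$, and for $n=0,1,\dots,N_k-1$ choose any $v^{k,n}\in\mathcal{B}_{\eta_\ell,\phi}(y^{k,n})$, set $y^{k,n+1}=y^{k,n}+v^{k,n}$ and increase $\ell$ by $1$; then set $y^{k+1}=\mathcal{A}(y^{k,N_k})$. Then for every $\varepsilon'>\varepsilon$, the $\varepsilon'$-output of the sequence $\{y^k\}_{k=0}^\infty$ with respect to $(T,\mathrm{Prox}_T)$ exists.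
   Context: Given $\varepsilon>0$ and a sequence $\{x^k\}_{k=0}^\infty\subseteq\mathbb{R}^L$, an element $x^K$ is the $\varepsilon$-output of the sequence (with respect to $(T,\mathrm{Prox}_T)$) if $\mathrm{Prox}_T(x^K)\le\varepsilon$ and $\mathrm{Prox}_T(x^k)>\varepsilon$ for all $0\le k<K$. The basic algorithm $x^{k+1}=\mathcal{A}(x^k)$ is strongly perturbation resilient if (i) there exists $\varepsilon>0$ such that the $\varepsilon$-output of $\{x^k\}$ exists for every $x^0\in\mathbb{R}^L$; and (ii) for every $\varepsilon>0$ for which the $\varepsilon$-output of $\{x^k\}$ exists for every $x^0$, the $\varepsilon'$-output also exists for every $\varepsilon'>\varepsilon$ and every sequence $\{y^k\}$ generated by $y^{k+1}=\mathcal{A}(y^k+\beta_k v^k)$, where $\{v^k\}\subseteq\mathbb{R}^L$ is bounded and $\beta_k\ge0$ with $\sum_k\beta_k<\infty$. For $\delta>0$ and $y\in\mathbb{R}^L$, the nonascending $\delta$-ball is $\mathcal{B}_{\delta,\phi}(y):=\{d\in\mathbb{R}^L:\|d\|\le\delta,\ \phi(y+d)\le\phi(y)\}$ ($\|\cdot\|$ the Euclidean norm). *)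

(* Defs.v *)
From HB Require Import structures.
From mathcomp Require Import all_boot all_order all_algebra.
From mathcomp Require Import all_classical all_reals all_analysis.
Set Implicit Arguments. Unset Strict Implicit. Unset Printing Implicit Defensive.
Import Order.TTheory GRing.Theory Num.Theory.
Import numFieldNormedType.Exports.
Local Open Scope classical_set_scope.
Local Open Scope ring_scope.

Section Defs.
Variables (R : realType) (L : nat).
Notation V := 'rV[R]_L.

Definition eucnorm (x : V) : R := Num.sqrt (\sum_(i < L) (x ord0 i) ^+ 2).

Definition is_eps_output (Prox : V -> R) (eps : R) (x : nat -> V) (K : nat) : Prop :=
  Prox (x K) <= eps /\ (forall k, (k < K)%N -> eps < Prox (x k)).

Definition eps_output_exists (Prox : V -> R) (eps : R) (x : nat -> V) : Prop :=
  exists K, is_eps_output Prox eps x K.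

Definition basic_seq (A : V -> V) (x0 : V) (k : nat) : V := iter k A x0.

Definition bounded_seq (v : nat -> V) : Prop :=
  exists M : R, forall k, eucnorm (v k) <= M.

Definition summable_seq (b : nat -> R) : Prop := cvgn (series b).

Definition strongly_perturbation_resilient (Prox : V -> R) (A : V -> V) : Prop :=
  (exists eps : R, 0 < eps /\ forall x0, eps_output_exists Prox eps (basic_seq A x0))
  /\
  (forall eps : R, 0 < eps ->
     (forall x0, eps_output_exists Prox eps (basic_seq A x0)) ->
     forall eps' : R, eps < eps' ->
     forall (y v : nat -> V) (beta : nat -> R),
       bounded_seq v -> (forall k, 0 <= beta k) -> summable_seq beta ->
       (forall k, y k.+1 = A (y k + beta k *: v k)) ->
       eps_output_exists Prox eps' y).

Definition nonasc_ball (phi : V -> R) (delta : R) (y : V) : set V :=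
  [set d | eucnorm d <= delta /\ phi (y + d) <= phi y].

(* y is produced by Algorithm 1 with inner iterates yin k n and perturbations v k n;
   the counter ell at the start of outer step k equals \sum_(j < k) N j. *)
Definition algorithm1 (A : V -> V) (phi : V -> R) (eta : nat -> R) (N : nat -> nat)
  (ybar : V) (y : nat -> V) (yin : nat -> nat -> V) (v : nat -> nat -> V) : Prop :=
  y 0%N = ybar /\
  (forall k, yin k 0%N = y k) /\
  (forall k n, (n < N k)%N ->
     nonasc_ball phi (eta ((\sum_(j < k) N j) + n)%N) (yin k n) (v k n) /\
     yin k n.+1 = yin k n + v k n) /\
  (forall k, y k.+1 = A (yin k (N k))).

End Defs.

(* Main.v *)
Require Import Defs.
From HB Require Import structures.
From mathcomp Require Import all_boot all_order all_algebra.
From mathcomp Require Import all_classical all_reals all_analysis.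
Import Order.TTheory GRing.Theory Num.Theory.
Import numFieldNormedType.Exports.
Local Open Scope classical_set_scope.
Local Open Scope ring_scope.

Lemma comp_le_euc (R : realType) (L : nat) (x : 'rV[R]_L) i :
  `|x ord0 i| <= eucnorm x.
Proof.
rewrite /eucnorm -sqrtr_sqr ler_wsqrtr //.
rewrite (bigD1 i) //= lerDl sumr_ge0 // => j _; exact: sqr_ge0.
Qed.

Lemma euc_le_sum (R : realType) (L : nat) (x : 'rV[R]_L) :
  eucnorm x <= \sum_(i < L) `|x ord0 i|.
Proof.
set T := \sum_(i < L) `|x ord0 i|.
have T0 : 0 <= T by apply: sumr_ge0 => i _.
rewrite /eucnorm -(ger0_norm T0) -sqrtr_sqr ler_wsqrtr //.
rewrite expr2 mulr_suml; apply: ler_sum => i _.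
rewrite -real_normK ?num_real // expr2 ler_wpM2l //.
by rewrite /T (bigD1 i) //= lerDl sumr_ge0.
Qed.

Lemma psum_gt0 (R : realType) (n : nat) (f : nat -> R) :
  (0 < n)%N -> (forall i, 0 < f i) -> 0 < \sum_(i < n) f i.
Proof.
case: n => // n _ fp; rewrite big_ord_recl.
apply: (lt_le_trans (fp 0%N)); rewrite lerDl sumr_ge0 // => i _; exact: ltW.
Qed.

Theorem lemma1 (R : realType) (L m : nat) (C : 'I_m -> set 'rV[R]_L)
  (Prox : 'rV[R]_L -> R) (A : 'rV[R]_L -> 'rV[R]_L) (phi : 'rV[R]_L -> R)
  (eps : R) (eta : nat -> R) (N : nat -> nat) (Nmax : nat) (ybar : 'rV[R]_L)
  (y : nat -> 'rV[R]_L) (yin v : nat -> nat -> 'rV[R]_L) :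
  (forall i, closed (C i) /\ convex_set (C i)) ->
  (forall x, 0 <= Prox x) ->
  strongly_perturbation_resilient Prox A ->
  0 < eps ->
  (forall x0, eps_output_exists Prox eps (basic_seq A x0)) ->
  (forall l, 0 < eta l) -> summable_seq eta ->
  (0 < Nmax)%N -> (forall k, (0 < N k)%N /\ (N k <= Nmax)%N) ->
  algorithm1 A phi eta N ybar y yin v ->
  forall eps' : R, eps < eps' -> eps_output_exists Prox eps' y.
Proof.
move=> _ _ [_ SPR] eps0 Hbas etap etas _ HN [Hy0 [Hin [Hstep HyA]]] eps' lt.
pose S k := (\sum_(j < k) N j)%N.
pose beta k := \sum_(n < N k) eta (S k + n)%N.
pose w k := (beta k)^-1 *: (yin k (N k) - y k).
have betap k : 0 < beta k.
  by apply: (@psum_gt0 R (N k) (fun n => eta (S k + n)%N)) => //; case: (HN k).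
have Hdiff k n : (n <= N k)%N -> yin k n - y k = \sum_(i < n) v k i.
  elim: n => [_|n IH Hn]; first by rewrite Hin subrr big_ord0.
  have [_ ->] := Hstep k n Hn.
  by rewrite big_ord_recr /= -IH ?(ltnW Hn) // addrAC.
apply: (SPR eps eps0 Hbas eps' lt y w beta).
- exists L%:R => k.
  apply: (le_trans (@euc_le_sum _ _ (w k))).
  have -> : L%:R = \sum_(i < L) (1 : R) by rewrite sumr_const card_ord.
  apply: ler_sum => i _.
  rewrite /w mxE Hdiff // summxE normrM ger0_norm; last by rewrite invr_ge0 ltW.
  rewrite mulrC ler_pdivrMr // mul1r.
  apply: (le_trans (ler_norm_sum _ _ _)); apply: ler_sum => n _.
  apply: (le_trans (@comp_le_euc _ _ (v k n) i)).
  by have [[]] := Hstep k n (ltn_ord n).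
- by move=> k; apply: ltW.
- have Sser n : series beta n = series eta (S n).
    elim: n => [|n IH]; first by rewrite /series /= /S big_ord0 !big_geq.
    transitivity (series beta n + beta n); first by rewrite /series /= big_nat_recr.
    rewrite IH /S big_ord_recr /= -/(S n) addnC series_addn; congr (_ + _).
    symmetry.
    rewrite -{1}[S n]add0n big_addn addnK big_mkord; apply: eq_bigr => i _; by rewrite addnC.
  have nd (u : nat -> R) : (forall n, 0 <= u n) -> nondecreasing_seq (series u).
    move=> u0; apply/nondecreasing_seqP => n.
    rewrite seriesS; by rewrite lerDr.
  apply: nondecreasing_is_cvgn.
    by apply: nd => k; apply: ltW.
  exists (limn (series eta)) => _ [n _ <-].
  rewrite Sser; apply: nondecreasing_cvgn_le => //.
  by apply: nd => k; apply: ltW.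
- move=> k; rewrite HyA /w scalerA divrr ?unitfE ?gt_eqF // scale1r.
  by rewrite addrC subrK.
Qed.
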